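(* For discrete containers $F$ and $G$, the chain-rule morphism $\mathrm{chain}_{F,G}:\partial F[G]\times\partial G\multimap\partial(F[G])$ is an equivalence of containers. In particular, for discrete set-truncated $F,G$ it is an isomorphism in the 1-category of set-truncated containers and cartesian morphisms.
   Context: Homotopy Type Theory. A type is discrete if it has decidable equality. A point $a:A$ is isolated if $\prod_{b:A}\mathrm{Dec}(a=b)$; $A^{\circ}$ is the subtype of isolated points; $A\setminus a_0:=\sum_{a:A}\neg(a_0=a)$. A container $(S\triangleleft P)$ is a type $S$ and family $P:S\to\mathsf{Type}$; it is discrete if each $P_s$ is discrete, set-truncated if $S$ and all $P_s$ are sets. Cartesian morphisms $(S\triangleleft P)\multimap(T\triangleleft Q)$: $(f,u)$, $f:S\to T$, $u:\prod_sQ_{fs}\simeq P_s$; equivalence of containers if $f$ is an equivalence. $(S\triangleleft P)\times(T\triangleleft Q):=(S\times T\triangleleft\lambda(s,t).P_s+Q_t)$; $(S\triangleleft P)[(T\triangleleft Q)]:=(\sum_{s:S}(P_s\to T)\triangleleft\lambda(s,g).\sum_{p:P_s}Q_{gp})$; $\partial(S\triangleleft P):=(\sum_{s:S}(P_s)^{\circ}\triangleleft\lambda(s,p).P_s\setminus p)$. $\Sigma\text{-isolate}_{A,B}:\sum_{a:A^{\circ}}B(a)^{\circ}\to(\sum_{a:A}B(a))^{\circ}$, $(a_0,b_0)\mapsto(a_0,b_0)$. Grafting $[f,t]:P_s\to T$ for $p_0:(P_s)^{\circ}$, $f:P_s\setminus p_0\to T$, $t:T$: value $t$ at points equal to $p_0$,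 $f(p,h)$ otherwise. For $F=(S\triangleleft P)$, $G=(T\triangleleft Q)$, $\mathrm{chain}_{F,G}$ has shape map $\big(((s,p_0),f),(t,q_0)\big)\mapsto\big((s,[f,t]),\Sigma\text{-isolate}(p_0,q_0)\big)$ and position component a family of equivalences $\big(\sum_{p:P_s}Q_{[f,t](p)}\big)\setminus(p_0,q_0)\simeq\big(\sum_{p:P_s\setminus p_0}Q_{f(p)}\big)+(Q_t\setminus q_0)$. *)

(* Defs.v *)
From Stdlib Require Import ProofIrrelevance Eqdep.
Set Implicit Arguments.

Definition Dec (P : Prop) : Type := (P + ~ P)%type.

Definition isolated {A : Type} (a : A) : Type := forall b : A, Dec (a = b).

Definition Isol (A : Type) : Type := {a : A & isolated a}.

Definition Minus (A : Type) (a0 : A) : Type := {a : A & ~ (a0 = a)}.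
Arguments Minus : clear implicits.

Definition discrete (A : Type) : Type := forall a b : A, Dec (a = b).

Definition isSet (A : Type) : Prop := forall (x y : A) (p q : x = y), p = q.

Definition is_equiv {A B : Type} (f : A -> B) : Prop :=
  exists g : B -> A, (forall a, g (f a) = a) /\ (forall b, f (g b) = b).

Record Equiv (A B : Type) := MkEquiv { eqv_fun :> A -> B; eqv_isequiv : is_equiv eqv_fun }.

Definition equiv_id (A : Type) : Equiv A A.
Proof. refine (@MkEquiv A A (fun a => a) _). exists (fun a => a); split; reflexivity. Defined.

Definition equiv_comp {A B C : Type} (e1 : Equiv A B) (e2 : Equiv B C) : Equiv A C.
Proof.
  refine (@MkEquiv A C (fun a => e2 (e1 a)) _).
  destruct (eqv_isequiv e1) as [g1 [h1 k1]], (eqv_isequiv e2) as [g2 [h2 k2]].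
  exists (fun c => g1 (g2 c)); split; intros; [rewrite h2, h1 | rewrite k1, k2]; reflexivity.
Defined.

Record Container := Cont { Sh : Type; Pos : Sh -> Type }.

Record CartMor (F G : Container) := MkCartMor {
  cm_sh : Sh F -> Sh G;
  cm_pos : forall s : Sh F, Equiv (Pos G (cm_sh s)) (Pos F s) }.

Definition is_cont_equiv {F G : Container} (m : CartMor F G) : Prop :=
  is_equiv (cm_sh m).

Definition cm_id (F : Container) : CartMor F F :=
  @MkCartMor F F (fun s => s) (fun s => equiv_id (Pos F s)).

Definition cm_comp {F G H : Container} (m : CartMor F G) (n : CartMor G H) : CartMor F H :=
  @MkCartMor F H (fun s => cm_sh n (cm_sh m s))
    (fun s => equiv_comp (cm_pos n (cm_sh m s)) (cm_pos m s)).

Definition is_cart_iso {F G : Container} (m : CartMor F G) : Prop :=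
  exists n : CartMor G F, cm_comp m n = cm_id F /\ cm_comp n m = cm_id G.

Definition disc_cont (F : Container) : Type := forall s : Sh F, discrete (Pos F s).

Definition set_cont (F : Container) : Prop :=
  isSet (Sh F) /\ forall s : Sh F, isSet (Pos F s).

Definition cprod (F G : Container) : Container :=
  Cont (fun st : Sh F * Sh G => (Pos F (fst st) + Pos G (snd st))%type).

Definition ccomp (F G : Container) : Container :=
  Cont (fun sg : {s : Sh F & Pos F s -> Sh G} =>
          {p : Pos F (projT1 sg) & Pos G (projT2 sg p)}).

Definition deriv (F : Container) : Container :=
  Cont (fun sp : {s : Sh F & Isol (Pos F s)} =>
          Minus (Pos F (projT1 sp)) (projT1 (projT2 sp))).

Definition sigma_isolate_dec {A : Type} {B : A -> Type} (a0 : A) (da : isolated a0)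
  (b0 : B a0) (db : isolated b0) : isolated (existT B a0 b0).
Proof.
  intros [a b]. destruct (da a) as [e | n].
  - destruct e. destruct (db b) as [e | n].
    + left. rewrite e. reflexivity.
    + right. intro E. apply n. exact (inj_pair2 _ _ _ _ _ E).
  - right. intro E. apply n. exact (f_equal (@projT1 A B) E).
Defined.

Definition sigma_isolate {A : Type} {B : A -> Type}
  (x : {a : Isol A & Isol (B (projT1 a))}) : Isol {a : A & B a} :=
  existT _ (existT B (projT1 (projT1 x)) (projT1 (projT2 x)))
    (sigma_isolate_dec (projT2 (projT1 x)) (projT2 (projT2 x))).

Definition graft {A T : Type} (p0 : Isol A) (f : Minus A (projT1 p0) -> T) (t : T) : A -> T :=
  fun p => match projT2 p0 p with
           | inl _ => t
           | inr h => f (existT _ p h)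
           end.

Lemma graft_at {A T : Type} (p0 : Isol A) (f : Minus A (projT1 p0) -> T) (t : T) :
  graft p0 f t (projT1 p0) = t.
Proof. unfold graft. destruct (projT2 p0 (projT1 p0)) as [_|n]; [reflexivity | now elim n]. Qed.

Lemma graft_off {A T : Type} (p0 : Isol A) (f : Minus A (projT1 p0) -> T) (t : T)
  (p : A) (k : ~ projT1 p0 = p) : graft p0 f t p = f (existT _ p k).
Proof.
  unfold graft. destruct (projT2 p0 p) as [e|k']; [now elim k |].
  f_equal. f_equal. apply proof_irrelevance.
Qed.

Definition isol_transport {T : Type} (Q : T -> Type) {x y : T} (e : x = y)
  (q : Isol (Q x)) : Isol (Q y) :=
  match e in _ = y' return Isol (Q y') with eq_refl => q end.

Lemma isol_transport_pr1 {T : Type} (Q : T -> Type) {x y : T} (e : x = y)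
  (q : Isol (Q x)) : projT1 (isol_transport Q e q) = eq_rect _ Q (projT1 q) _ e.
Proof. destruct e. reflexivity. Qed.

Lemma rew_rl {T : Type} (Q : T -> Type) {x y : T} (q : Q x) (e : x = y) :
  eq_rect_r Q (eq_rect _ Q q _ e) e = q.
Proof. destruct e. reflexivity. Qed.

Lemma rew_lr {T : Type} (Q : T -> Type) {x y : T} (q : Q y) (e : x = y) :
  eq_rect _ Q (eq_rect_r Q q e) _ e = q.
Proof. destruct e. reflexivity. Qed.

Section ChainPos.
Context {A T : Type} (Q : T -> Type) (p0 : Isol A)
        (f : Minus A (projT1 p0) -> T) (t : T) (q0 : Isol (Q t)).

Definition chain_q0 : Isol (Q (graft p0 f t (projT1 p0))) :=
  isol_transport Q (eq_sym (graft_at p0 f t)) q0.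

Definition chain_pt : {p : A & Q (graft p0 f t p)} :=
  projT1 (sigma_isolate (B := fun p => Q (graft p0 f t p)) (existT _ p0 chain_q0)).

Definition chain_pos_fun
  (x : Minus {p : A & Q (graft p0 f t p)} chain_pt) :
  ({p : Minus A (projT1 p0) & Q (f p)} + Minus (Q t) (projT1 q0))%type.
Proof.
  destruct x as [[p q] h].
  destruct (projT2 p0 p) as [e | k].
  - right. destruct e.
    exists (eq_rect _ Q q _ (graft_at p0 f t)).
    intro E. apply h. unfold chain_pt, chain_q0; simpl.
    f_equal. clear h. rewrite isol_transport_pr1, E. clear E.
    generalize (graft_at p0 f t) as e. revert q.
    generalize (graft p0 f t (projT1 p0)) as u. intros u q e.
    destruct e. reflexivity.
  - left. exists (existT _ p k). exact (eq_rect _ Q q _ (graft_off p0 f t k)).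
Defined.

Definition chain_pos_inv
  (y : ({p : Minus A (projT1 p0) & Q (f p)} + Minus (Q t) (projT1 q0))%type) :
  Minus {p : A & Q (graft p0 f t p)} chain_pt.
Proof.
  destruct y as [[[p k] q] | [q k]].
  - exists (existT _ p (eq_rect_r Q q (graft_off p0 f t k))).
    intro E. apply k. exact (f_equal (@projT1 _ _) E).
  - exists (existT _ (projT1 p0) (eq_rect_r Q q (graft_at p0 f t))).
    intro E. apply k. clear k. unfold chain_pt, chain_q0 in E; simpl in E.
    apply inj_pair2 in E. rewrite isol_transport_pr1 in E. unfold eq_rect_r in E.
    revert E. generalize (projT1 q0) as q1. intro q1.
    generalize (graft_at p0 f t) as e. revert q q1.
    generalize (graft p0 f t (projT1 p0)) as u. intros u q q1 e.
    destruct e. simpl. auto.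
Defined.

Lemma chain_pos_is_equiv : is_equiv chain_pos_fun.
Proof.
  exists chain_pos_inv. split.
  - intros [[p q] h]. unfold chain_pos_fun.
    destruct (projT2 p0 p) as [e | k].
    + destruct e. simpl. unfold chain_pos_inv.
      apply eq_existT_uncurried. exists (f_equal (existT _ (projT1 p0)) (rew_rl Q q _)).
      apply proof_irrelevance.
    + simpl. unfold chain_pos_inv.
      apply eq_existT_uncurried. exists (f_equal (existT _ p) (rew_rl Q q _)).
      apply proof_irrelevance.
  - intros [[[p k] q] | [q k]]; unfold chain_pos_inv, chain_pos_fun; simpl.
    + destruct (projT2 p0 p) as [e | k'].
      * exfalso. exact (k e).
      * assert (kk : k' = k) by apply proof_irrelevance. subst k'.
        f_equal. f_equal. apply rew_lr.
    + destruct (projT2 p0 (projT1 p0)) as [e | n].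
      * rewrite (UIP_refl _ _ e). simpl. f_equal.
        apply eq_existT_uncurried. exists (rew_lr Q q _). apply proof_irrelevance.
      * exfalso. exact (n eq_refl).
Qed.

Definition chain_pos_equiv := MkEquiv chain_pos_is_equiv.

End ChainPos.

Section Chain.
Variables F G : Container.

Definition chain_sh (x : Sh (cprod (ccomp (deriv F) G) (deriv G))) :
  Sh (deriv (ccomp F G)) :=
  let s := projT1 (projT1 (fst x)) in
  let p0 := projT2 (projT1 (fst x)) in
  let f := projT2 (fst x) in
  let t := projT1 (snd x) in
  let q0 := projT2 (snd x) in
  existT _ (existT (fun s => Pos F s -> Sh G) s (graft p0 f t))
    (sigma_isolate (B := fun p => Pos G (graft p0 f t p))
       (existT _ p0 (chain_q0 (Pos G) p0 f t q0))).

Definition chain_pos (x : Sh (cprod (ccomp (deriv F) G) (deriv G))) :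
  Equiv (Pos (deriv (ccomp F G)) (chain_sh x)) (Pos (cprod (ccomp (deriv F) G) (deriv G)) x) :=
  chain_pos_equiv (Pos G) (projT2 (projT1 (fst x))) (projT2 (fst x))
    (projT1 (snd x)) (projT2 (snd x)).

Definition chain : CartMor (cprod (ccomp (deriv F) G) (deriv G)) (deriv (ccomp F G)) :=
  MkCartMor _ _ chain_sh chain_pos.

End Chain.

(* Main.v *)
Require Import Defs.
From Stdlib Require Import ProofIrrelevance Eqdep FunctionalExtensionality ClassicalEpsilon.

Lemma dec_prop (P : Prop) (x y : Dec P) : x = y.
Proof.
  destruct x as [a|a], y as [b|b]; try (exfalso; tauto);
  f_equal; apply proof_irrelevance.
Qed.

Lemma isol_eq (X : Type) (x y : Isol X) : projT1 x = projT1 y -> x = y.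
Proof.
  destruct x as [a ia], y as [b ib]; simpl; intro E; subst b.
  f_equal. apply functional_extensionality_dep; intro; apply dec_prop.
Qed.

Lemma isolated_eq {X : Type} {a : X} (i j : isolated a) : i = j.
Proof. apply functional_extensionality_dep; intro; apply dec_prop. Qed.

Lemma rew_loop {T : Type} (Q : T -> Type) {x y : T} (e1 : x = y) (e2 : y = x) (q : Q x) :
  eq_rect _ Q (eq_rect _ Q q _ e1) _ e2 = q.
Proof. destruct e1. rewrite (UIP_refl _ _ e2). reflexivity. Qed.

Section Ch.
Variables F G : Container.
Variables (dF : disc_cont F) (dG : disc_cont G).

Definition chain_inv (y : Sh (deriv (ccomp F G))) : Sh (cprod (ccomp (deriv F) G) (deriv G)) :=
  let s := projT1 (projT1 y) in
  let g := projT2 (projT1 y) in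
  let p := projT1 (projT1 (projT2 y)) in
  let q := projT2 (projT1 (projT2 y)) in
  (existT (fun sp : {s : Sh F & Isol (Pos F s)} => Minus (Pos F (projT1 sp)) (projT1 (projT2 sp)) -> Sh G)
     (existT _ s (existT _ p (dF s p))) (fun x => g (projT1 x)),
   existT (fun t => Isol (Pos G t)) (g p) (existT _ q (dG (g p) q))).

Lemma snd_eq (u t : Sh G) (e : u = t) (q0 : Isol (Pos G t)) (q' : Pos G u) i :
  eq_rect _ (Pos G) q' _ e = projT1 q0 ->
  existT (fun t => Isol (Pos G t)) u (existT _ q' i) = existT _ t q0.
Proof. destruct e. simpl. intro H. f_equal. apply isol_eq. exact H. Qed.

Lemma sh_eq (s : Sh F) (g1 g2 : Pos F s -> Sh G) (E : g1 = g2) (p : Pos F s)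
  (q1 : Pos G (g1 p)) (q2 : Pos G (g2 p)) i1 i2 :
  eq_rect _ (fun g => Pos G (g p)) q1 _ E = q2 ->
  existT (fun sg : {s : Sh F & Pos F s -> Sh G} => Isol {p : Pos F (projT1 sg) & Pos G (projT2 sg p)})
    (existT _ s g1) (existT _ (existT _ p q1) i1) =
  existT _ (existT _ s g2) (existT _ (existT _ p q2) i2).
Proof. destruct E. simpl. intro H. subst q2. f_equal. apply isol_eq. reflexivity. Qed.

Lemma rew_map_app (s : Sh F) (g1 g2 : Pos F s -> Sh G) (E : g1 = g2) (p : Pos F s) (q : Pos G (g1 p)) :
  eq_rect _ (fun g => Pos G (g p)) q _ E = eq_rect _ (Pos G) q _ (f_equal (fun g => g p) E).
Proof. destruct E. reflexivity. Qed.

Lemma chain_equiv : is_equiv (@chain_sh F G).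
Proof.
  exists chain_inv. split.
  - intros [[[s [a ia]] f] [t [q0 iq0]]].
    unfold chain_inv, chain_sh; cbn.
    f_equal.
    + rewrite (isolated_eq (dF s a) ia). f_equal.
      apply functional_extensionality; intros [p h]. cbn.
      apply (graft_off (existT _ a ia) f t h).
    + apply snd_eq with (e := graft_at (existT _ a ia) f t).
      unfold chain_q0. rewrite isol_transport_pr1. cbn.
      apply rew_loop.
  - intros [[s g] [[p q] i]].
    unfold chain_inv, chain_sh; cbn.
    assert (E : graft (existT _ p (dF s p)) (fun x => g (projT1 x)) (g p) = g).
    { apply functional_extensionality; intro p'. unfold graft; cbn.
      destruct (dF s p p') as [e|k]; [now subst | reflexivity]. }
    apply sh_eq with (E := E).
    rewrite rew_map_app. unfold chain_q0. cbn [projT1 projT2]. rewrite isol_transport_pr1.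
    apply rew_loop.
Qed.

End Ch.

Definition einv {A B} (e : Equiv A B) : {g : B -> A | (forall a, g (e a) = a) /\ (forall b, e (g b) = b)} :=
  constructive_indefinite_description _ (eqv_isequiv e).

Lemma equiv_eq {A B} (e1 e2 : Equiv A B) : (forall x, e1 x = e2 x) -> e1 = e2.
Proof.
  destruct e1 as [f1 h1], e2 as [f2 h2]; simpl; intro H.
  assert (f1 = f2) by (apply functional_extensionality; exact H). subst f2.
  f_equal. apply proof_irrelevance.
Qed.

Lemma cm_eq X Y (f1 f2 : Sh X -> Sh Y) (p1 : forall s, Equiv (Pos Y (f1 s)) (Pos X s)) (p2 : forall s, Equiv (Pos Y (f2 s)) (Pos X s))
  (H : forall s, f1 s = f2 s)
  (Hp : forall s (x : Pos Y (f2 s)), p1 s (eq_rect_r (Pos Y) x (H s)) = p2 s x) :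
  MkCartMor X Y f1 p1 = MkCartMor X Y f2 p2.
Proof.
  assert (E : f1 = f2) by (apply functional_extensionality; exact H). subst f2.
  assert (p1 = p2).
  { apply functional_extensionality_dep; intro s. apply equiv_eq. intro x.
    rewrite <- Hp. rewrite (UIP_refl _ _ (H s)). reflexivity. }
  subst. reflexivity.
Qed.

Lemma equiv_iso X Y (m : CartMor X Y) : is_cont_equiv m -> is_cart_iso m.
Proof.
  intros [g [gf fg]].

  set (im := fun s => proj1_sig (einv (cm_pos m s))).
  assert (im1 : forall s a, im s (cm_pos m s a) = a) by (intros; apply (proj2_sig (einv (cm_pos m s)))).
  assert (im2 : forall s b, cm_pos m s (im s b) = b) by (intros; apply (proj2_sig (einv (cm_pos m s)))).
  set (pn := fun b (x : Pos X (g b)) => eq_rect _ (Pos Y) (im (g b) x) _ (fg b)).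
  assert (pe : forall b, is_equiv (pn b)).
  { intro b. exists (fun y => cm_pos m (g b) (eq_rect_r (Pos Y) y (fg b))). split.
    - intro x. unfold pn. rewrite rew_rl. apply im2.
    - intro y. unfold pn. rewrite im1. apply rew_lr. }
  exists (MkCartMor Y X g (fun b => MkEquiv (pe b))). split.
  - unfold cm_comp, cm_id; simpl.
    apply cm_eq with (H := gf). intros s x; simpl. unfold pn.
    rewrite (proof_irrelevance _ (fg (cm_sh m s)) (f_equal (cm_sh m) (gf s))).
    unfold eq_rect_r. generalize (gf s). generalize (g (cm_sh m s)). intros s' e. destruct e.
    simpl. apply im2.
  - unfold cm_comp, cm_id; simpl.
    apply cm_eq with (H := fg). intros b x; simpl. unfold pn.
    rewrite im1. apply rew_lr.
Qed.

Theorem theorem4p5 (F G : Container) (dF : disc_cont F) (dG : disc_cont G) :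
  is_cont_equiv (chain F G) /\
  (set_cont F -> set_cont G -> is_cart_iso (chain F G)).
Proof.
  assert (H : is_cont_equiv (chain F G)) by exact (@chain_equiv F G dF dG).
  split; [exact H | intros _ _; apply equiv_iso; exact H].
Qed.
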